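(* Let ${\bf r}=(r_0,r_1,r_2,\dots)$ be a sequence of nonnegative integers with only finitely many nonzero entries, put $n=\sum_{d\ge1}r_d$ and $\ell=-\sum_{d\ge0}(d-1)r_d$, and assume $\ell\ge1$ (so $r_0\ge1$). Then, as polynomials in $x$, $$\mathcal H_{\bf r}(x):=\sum_{F\in\mathscr F({\bf r})}\prod_{v\in I(F)}\frac{((d_v-1)h_v+1)x+1-h_v}{d_vh_v}=\frac{\ell}{r_0}\binom{r_0x}{r_0x-n,\,r_1,\,r_2,\dots},$$ where the right-hand side means the polynomial $\frac{\ell}{r_0}\cdot\frac{(r_0x)(r_0x-1)\cdots(r_0x-n+1)}{r_1!\,r_2!\cdots}$.
   Context: A plane tree is an unlabelled rooted tree in which the children of every vertex are linearly ordered. A plane forest is a finite linearly ordered sequence of plane trees. For vertices $u,v$ in a tree, $v$ is a descendant of $u$ if $u$ lies on the path from the root to $v$ (so $u$ is a descendant of itself). The degree $d_v$ of a vertex $v$ is its number of children; $v$ is internal if $d_v\ge1$, otherwise a leaf. $I(F)$ denotes the set of internal vertices of a forest $F$. The hook length $h_v$ of an internal vertex $v$ is the number of internal vertices among the descendants of $v$ (including $v$ itself). A plane forest is of type ${\bf r}=(r_0,r_1,\dots)$ if it has exactly $r_i$ vertices of degree $i$ for each $i\ge0$; $\mathscr F({\bf r})$ is the set of plane forests of type ${\bf r}$. For such forests $n=\sum_{d\ge1}r_d=|I(F)|$ and $\ell=-\sum_{d\ge0}(d-1)r_d$ is the number of trees. *)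

(* Defs.v *)
From Stdlib Require Import List.
From mathcomp Require Import all_boot all_order all_algebra.
Set Implicit Arguments. Unset Strict Implicit. Unset Printing Implicit Defensive.
Import GRing.Theory Num.Theory.

Inductive ptree : Type := Node of seq ptree.

Definition pforest := seq ptree.

Fixpoint icount (t : ptree) : nat :=
  let: Node cs := t in (size cs != 0%N) + sumn (map icount cs).

Fixpoint degs (t : ptree) : seq nat :=
  let: Node cs := t in size cs :: flatten (map degs cs).

(* for each internal vertex v: the pair (d_v, h_v), h_v = hook length
   = number of internal vertices among the descendants of v (v included) *)
Fixpoint ivdata (t : ptree) : seq (nat * nat) :=
  let: Node cs := t in
  (if cs is [::] then [::] else [:: (size cs, icount (Node cs))])
    ++ flatten (map ivdata cs).

Definition forest_degs (F : pforest) : seq nat := flatten (map degs F).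
Definition forest_ivdata (F : pforest) : seq (nat * nat) := flatten (map ivdata F).

(* the type r = (r_0, r_1, ...) is given as a finite list; r_i = nth 0 r i
   (entries beyond the list are 0). F has type r iff it has exactly r_i
   vertices of degree i, for every i. *)
Definition of_type (r : seq nat) (F : pforest) : Prop :=
  forall i : nat, count_mem i (forest_degs F) = nth 0%N r i.

Definition nint (r : seq nat) : nat := \sum_(1 <= d < size r) nth 0%N r d.

Definition ell (r : seq nat) : int :=
  \sum_(d < size r) ((1 - (d : nat)%:Z) * (nth 0%N r d)%:Z)%R.

Local Open Scope ring_scope.

Definition hook_factor (d h : nat) : {poly rat} :=
  (((((d.-1 * h).+1)%:R : rat) *: 'X + ((1 - h%:Z)%:~R : rat)%:P)
     * ((d * h)%:R : rat)^-1%:P).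

Definition Hpoly_of (F : pforest) : {poly rat} :=
  \prod_(p <- forest_ivdata F) hook_factor p.1 p.2.

Definition rhs_poly (r : seq nat) : {poly rat} :=
  ((ell r)%:~R / ((nth 0%N r 0)%:R : rat))%:P
  * (\prod_(i < nint r) (((nth 0%N r 0)%:R : rat) *: 'X - (i%:R : rat)%:P))
  * ((\prod_(1 <= d < size r) ((nth 0%N r d)`!)%:R : rat)^-1)%:P.

(* Main.v *)
From HB Require Import structures.
Require Import Defs.
From Stdlib Require Import List.
From mathcomp Require Import all_boot all_order all_algebra.
From mathcomp Require Import zify ring lra.
Import GRing.Theory Num.Theory.
Set Implicit Arguments. Unset Strict Implicit. Unset Printing Implicit Defensive.

Local Close Scope ring_scope.
Fixpoint sw (m : seq nat) : nat := if m is a :: m' then sumn m' + sw m' else 0.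
Fixpoint facv (m : seq nat) : nat := if m is a :: m' then a`! * facv m' else 1.
Fixpoint dec (j : nat) (m : seq nat) : seq nat :=
  match m, j with
  | [::], _ => [::]
  | a :: m', 0 => a.-1 :: m'
  | a :: m', j'.+1 => a :: dec j' m'
  end.
Fixpoint vsub (m s : seq nat) : seq nat :=
  match m, s with
  | a :: m', b :: s' => (a - b) :: vsub m' s'
  | _, _ => m
  end.
Lemma dec0 a m : dec 0 (a :: m) = a.-1 :: m. Proof. by []. Qed.
Lemma decS j a m : dec j.+1 (a :: m) = a :: dec j m. Proof. by []. Qed.
Lemma vsub_cons a m b s : vsub (a :: m) (b :: s) = (a - b)%N :: vsub m s. Proof. by []. Qed.
Arguments dec : simpl never.
Arguments vsub : simpl never.

Fixpoint SUB (m : seq nat) : seq (seq nat) :=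
  if m is a :: m' then [seq i :: s | i <- iota 0 a.+1, s <- SUB m'] else [:: [::]].

Lemma SUB_cons a m : SUB (a :: m) = [seq i :: s | i <- iota 0 a.+1, s <- SUB m].
Proof. by []. Qed.
Arguments SUB : simpl never.

Lemma mem_SUB m s : (s \in SUB m) = all2 leq s m.
Proof.
elim: m s => [|a m IH] [|b s]; rewrite ?SUB_cons //.
- by apply/allpairsP => -[[i t] /= [_ _ ]].
- rewrite [all2 _ _ _]/=.
  apply/allpairsP/andP => [[[i t] [Hi Ht [-> ->]]]|[Hb Hs]].
    by rewrite mem_iota /= in Hi; rewrite -IH; split => //; lia.
  by exists (b, s); rewrite mem_iota IH; split => //; lia.
Qed.

Lemma SUB_uniq m : uniq (SUB m).
Proof.
elim: m => [|a m IH] //; rewrite SUB_cons; apply: allpairs_uniq => //; first exact: iota_uniq.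
by move=> [i s] [j t] _ _ /= [-> ->].
Qed.

Lemma sumn_dec j m : 0 < nth 0 m j -> (sumn (dec j m) + 1 = sumn m)%N.
Proof.
elim: m j => [|b m IH] [|j] //= H; first lia.
by have := IH j H; lia.
Qed.

Lemma sw_dec j m : 0 < nth 0 m j -> (sw (dec j m) + j = sw m)%N.
Proof.
elim: m j => [|a m IH] [|j] //= H; first lia.
by have := IH j H; have := sumn_dec H; lia.
Qed.

Lemma facv_dec j m : 0 < nth 0 m j -> facv m = (nth 0 m j * facv (dec j m))%N.
Proof.
elim: m j => [|b m IH] [|j] //= H.
  by case: b H => // b _; rewrite factS /=; lia.
by rewrite (IH j H); lia.
Qed.

Lemma size_dec j m : size (dec j m) = size m.
Proof. by elim: m j => [|b m IH] [|j] //=; rewrite IH. Qed.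

Lemma nth_dec j m i : nth 0 (dec j m) i = (nth 0 m i - (i == j))%N.
Proof.
elim: m j i => [|b m IH] [|j] [|i] //=; try lia.
by rewrite IH.
Qed.

Lemma size_vsub m s : size (vsub m s) = size m.
Proof. by elim: m s => [|a m IH] [|b s] //=; rewrite IH. Qed.

Lemma nth_vsub m s i : size s = size m -> nth 0 (vsub m s) i = (nth 0 m i - nth 0 s i)%N.
Proof.
elim: m s i => [|a m IH] [|b s] [|i] //=; try lia.
by move=> [] /IH ->.
Qed.

Lemma sw_vsub m s : all2 leq s m -> (sw (vsub m s) + sw s = sw m)%N /\ (sumn (vsub m s) + sumn s = sumn m)%N.
Proof.
elim: m s => [|a m IH] [|b s] //= /andP [Hb /IH [H1 H2]]; lia.
Qed.

Lemma sumn0_sw m : sumn m = 0%N -> sw m = 0%N.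
Proof. elim: m => [|a m IH] //=; lia. Qed.

Lemma SUB_size m s : s \in SUB m -> size s = size m.
Proof. rewrite mem_SUB; elim: m s => [|a m IH] [|b s] //= /andP [_ /IH ->] //. Qed.

Local Open Scope ring_scope.
Lemma sumn0_nth m j : sumn m = 0%N -> nth 0%N m j = 0%N.
Proof. by elim: m j => [|a m IH] [|j] //=; [lia | move=> H; apply: IH; lia]. Qed.

Lemma nth_le_sumn m j : (nth 0%N m j <= sumn m)%N.
Proof. elim: m j => [|a m IH] [|j] //=; [lia | have := IH j; lia]. Qed.

Lemma sum_nth m : (\sum_(j < size m) nth 0%N m j)%N = sumn m.
Proof. elim: m => [|a m IH]; first by rewrite big_ord0. by rewrite big_ord_recl /= IH. Qed.

Lemma sum_jnth m : (\sum_(j < size m) j * nth 0%N m j)%N = sw m.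
Proof.
elim: m => [|a m IH]; first by rewrite big_ord0.
rewrite big_ord_recl /= mul0n add0n -IH -sum_nth -big_split /=.
by apply: eq_bigr => i _; rewrite /bump leq0n add0n add1n mulSn.
Qed.

Section Alg.
Variable k : nat.

Definition ff (y : rat) n := \prod_(i < n) (y - i%:R).

Lemma ffS y n : ff y n.+1 = y * ff (y - 1) n.
Proof.
rewrite /ff big_ord_recl subr0; congr (_ * _); apply: eq_bigr => i _.
by rewrite lift0 /= -addn1 natrD; ring.
Qed.

Lemma ffSr y n : ff y n.+1 = ff y n * (y - n%:R).
Proof. by rewrite /ff big_ord_recr. Qed.

Lemma ff0 y : ff y 0 = 1.
Proof. by rewrite /ff big_ord0. Qed.

Definition p (u : rat) (m : seq nat) : rat :=
  if sumn m == 0%N then 1 else u * ff (u + (sw m * k)%:R - 1) (sumn m).-1 / (facv m)%:R.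

Lemma facv_gt0 m : (0 < facv m)%N.
Proof. by elim: m => //= a m IH; rewrite muln_gt0 fact_gt0. Qed.

Lemma facv0 m : sumn m = 0%N -> facv m = 1%N.
Proof. elim: m => [|a m IH] //= H; rewrite IH; [|lia]. have -> : a = 0%N by lia. by []. Qed.

Lemma facv1 m : sumn m = 1%N -> facv m = 1%N.
Proof.
elim: m => [|a m IH] //= H.
have [Ha|[Ha|Ha]] : (a = 0 \/ a = 1 \/ 1 < a)%N by lia.
- subst a; rewrite IH; [by [] | lia].
- subst a; rewrite facv0; [by [] | lia].
- lia.
Qed.

Lemma sum_lin m (u : rat) :
  \sum_(j < size m) (nth 0%N m j)%:R * (u + (j * k)%:R) = (sumn m)%:R * u + (sw m * k)%:R.
Proof.
under eq_bigr => j _ do rewrite mulrDr.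
rewrite big_split /= -big_distrl /= -sum_nth natr_sum; congr (_ + _).
rewrite -sum_jnth big_distrl /= natr_sum; apply: eq_bigr => j _.
by rewrite -natrM; congr (_%:R); lia.
Qed.

Lemma pE0 u m : sumn m = 0%N -> p u m = 1.
Proof. by rewrite /p => ->. Qed.

Lemma pE u m n : sumn m = n.+1 -> p u m = u * ff (u + (sw m * k)%:R - 1) n / (facv m)%:R.
Proof. by rewrite /p => ->. Qed.

Lemma fac_neq0 m : (facv m)%:R != 0 :> rat.
Proof. by rewrite pnatr_eq0 -lt0n facv_gt0. Qed.

Lemma p_diff m u : p (u + 1) m - p u m =
  \sum_(j < size m) (if (0 < nth 0%N m j)%N then p (u + (j * k)%:R) (dec j m) else 0).
Proof.
case En: (sumn m) => [|n].
  by rewrite !pE0 // subrr big1 // => j _; rewrite sumn0_nth.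
case: n En => [|n'] En.
  have -> : p (u + 1) m - p u m = 1.
    by rewrite (pE (u+1) En) (pE u En) facv1 // !ff0 mulr1n !divr1 ?mulr1; ring.
  have Hle : forall j, (nth 0%N m j <= 1)%N.
    by move=> j; rewrite -En nth_le_sumn.
  rewrite (eq_bigr (fun j : 'I_(size m) => (nth 0%N m j)%:R)); last first.
    move=> j _; case: ifP => Hj; last by have ->: nth 0%N m j = 0%N by lia.
    rewrite pE0; last by have := sumn_dec Hj; lia.
    by have ->: nth 0%N m j = 1%N by have := Hle j; lia.
  by rewrite -natr_sum sum_nth En.
have key : forall j : 'I_(size m), (if (0 < nth 0%N m j)%N then p (u + (j * k)%:R) (dec j m) else 0)
   = (nth 0%N m j)%:R * (u + (j*k)%:R) * (ff (u + (sw m * k)%:R - 1) n' / (facv m)%:R).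
  move=> j; case: ifP => Hj; last by (have ->: nth 0%N m j = 0%N by lia); rewrite !mul0r.
  have Hs := sumn_dec Hj; have Hw := sw_dec Hj; have Hf := facv_dec Hj.
  rewrite (@pE _ _ n'); last lia.
  have -> : u + (j * k)%:R + (sw (dec j m) * k)%:R = u + (sw m * k)%:R.
    by rewrite -Hw mulnDl natrD; ring.
  rewrite Hf (natrM _ (nth _ _ _)).
  have Hm : (nth 0%N m j)%:R != 0 :> rat by rewrite pnatr_eq0 -lt0n.
  have Hd := fac_neq0 (dec j m).
  by field; rewrite Hm Hd.
rewrite (eq_bigr _ (fun j _ => key j)) -big_distrl /= sum_lin.
rewrite (pE (u+1) En) (pE u En) ffS ffSr.
have -> : u + 1 + (sw m * k)%:R - 1 - 1 = u + (sw m * k)%:R - 1 by ring.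
rewrite En -[n'.+2]addn2 natrD.
have Hd := fac_neq0 m.
by field.
Qed.
End Alg.

Lemma nthS (a : nat) s j : nth 0%N (a :: s) j.+1 = nth 0%N s j. Proof. by []. Qed.
Lemma nth0 (a : nat) s : nth 0%N (a :: s) 0 = a. Proof. by []. Qed.

Lemma reindex m (Phi : seq nat -> seq nat -> nat -> rat) :
  \sum_(s <- SUB m) \sum_(j < size m)
      (if (0 < nth 0%N s j)%N then Phi (dec j s) (vsub m s) j else 0)
  = \sum_(j < size m) (if (0 < nth 0%N m j)%N then
        \sum_(s <- SUB (dec j m)) Phi s (vsub (dec j m) s) j else 0).
Proof.
elim: m Phi => [|a m IH] Phi.
  by rewrite big_seq1 !big_ord0.
rewrite SUB_cons big_allpairs_dep.
under eq_bigr => i _ do (under eq_bigr => s _ do rewrite big_ord_recl; rewrite big_split).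
rewrite big_split big_ord_recl.
under [X in _ + X = _]eq_bigr => i _ do under eq_bigr => s _ do under eq_bigr => j _ do rewrite lift0 nthS decS vsub_cons.
under [X in _ = _ + X]eq_bigr => j _ do rewrite lift0 nthS decS.
under [X in X + _ = _]eq_bigr => i _ do under eq_bigr => s _ do rewrite dec0 vsub_cons nth0 /=.
rewrite nth0 /= dec0.
congr (_ + _).
  rewrite big_cons big1 ?add0r; last by move=> s _.
  case: a => [|a]; first by rewrite big_nil.
  rewrite SUB_cons big_allpairs_dep -[1%N]addn0 iotaDl big_map /=.
  by apply: eq_bigr => i _; apply: eq_bigr => s _; rewrite vsub_cons add1n subSS.
under eq_bigr => i _ do rewrite (IH (fun x y j => Phi (i :: x) ((a - i)%N :: y) j.+1)).
rewrite exchange_big; apply: eq_bigr => j _; case: ifP => Hj; last by rewrite big1.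
rewrite SUB_cons big_allpairs_dep; apply: eq_bigr => i _; apply: eq_bigr => s _.
by rewrite vsub_cons.
Qed.

Lemma sumn0_nseq s : sumn s = 0%N -> s = nseq (size s) 0%N.
Proof. elim: s => [|a s IH] //= H; rewrite -IH; [congr (_ :: _)|]; lia. Qed.

Lemma nseq_SUB m : nseq (size m) 0%N \in SUB m.
Proof. by rewrite mem_SUB; elim: m => //= a m ->; rewrite andbT. Qed.

Lemma vsub_nseq m : vsub m (nseq (size m) 0%N) = m.
Proof. by elim: m => //= a m IH; rewrite vsub_cons IH subn0. Qed.

Lemma sumn_nseq0 n : sumn (nseq n 0%N) = 0%N.
Proof. by elim: n. Qed.

Section Alg2.
Variable k : nat.
Local Notation p := (p k).

Lemma sum_SUB0 m (F : seq nat -> rat) :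
  \sum_(s <- SUB m) (if sumn s == 0%N then F s else 0) = F (nseq (size m) 0%N).
Proof.
rewrite (bigD1_seq (nseq (size m) 0%N)) ?nseq_SUB ?SUB_uniq //= sumn_nseq0 eqxx.
rewrite big1_seq ?addr0 // => s /andP [Hs Hin].
case: eqP => // /sumn0_nseq Hs0; move: Hs; rewrite Hs0 (SUB_size Hin) eqxx //.
Qed.

Lemma binom_aux N : forall m, (sumn m < N)%N -> forall u v : nat,
  p (u + v)%:R m = \sum_(s <- SUB m) p u%:R s * p v%:R (vsub m s).
Proof.
elim: N => [|N IHN] m Hm u v //.
elim: u v => [|u IHu] v.
  rewrite add0n.
  have p0 : forall s, p 0 s = if sumn s == 0%N then 1 else 0.
    by move=> s; rewrite /p; case: eqP => //; rewrite !mul0r.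
  rewrite -{1}(vsub_nseq m) -(sum_SUB0 m (fun s => p v%:R (vsub m s))).
  by apply: eq_bigr => s _; rewrite p0; case: (_ == _); rewrite ?mul1r ?mul0r.
have Hd : forall s, p (u.+1)%:R s = p u%:R s + \sum_(j < size s)
    (if (0 < nth 0%N s j)%N then p (u%:R + (j*k)%:R) (dec j s) else 0).
  by move=> s; rewrite -natr1 -(p_diff k s u%:R); ring.
under eq_bigr => s _ do rewrite Hd mulrDl.
rewrite big_split /= -IHu.
rewrite (eq_big_seq (fun s => \sum_(j < size m) (if (0 < nth 0%N s j)%N then
   p (u%:R + (j*k)%:R) (dec j s) * p v%:R (vsub m s) else 0))); last first.
  move=> s Hs; rewrite (SUB_size Hs) big_distrl /=; apply: eq_bigr => j _.
  by case: ifP => _; rewrite ?mul0r.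
rewrite (reindex m (fun x y j => p (u%:R + (j*k)%:R) x * p v%:R y)).
have -> : (u.+1 + v)%:R = (u + v)%:R + 1 :> rat by rewrite addSn -natr1.
rewrite -[p ((u + v)%:R + 1) m](subrK (p (u + v)%:R m)) p_diff addrC.
congr (_ + _); apply: eq_bigr => j _; case: ifP => Hj //.
rewrite -natrD -IHN; last by have := sumn_dec Hj; lia.
by congr (p _ _); rewrite -natrD; congr (_%:R); lia.
Qed.

Lemma binom m (u v : nat) :
  p (u + v)%:R m = \sum_(s <- SUB m) p u%:R s * p v%:R (vsub m s).
Proof. exact: (@binom_aux (sumn m).+1). Qed.
End Alg2.

Local Open Scope ring_scope.
Lemma hook_val d h (x : rat) :
  (hook_factor d h).[x] = (((d.-1 * h).+1)%:R * x + 1 - h%:R) / (d * h)%:R.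
Proof.
rewrite /hook_factor hornerM hornerD hornerZ hornerX !hornerC intrB.
by rewrite addrA.
Qed.

Lemma sum_lin2 s (a b : rat) :
  \sum_(j < size s) (nth 0%N s j)%:R * (a * j%:R + b) = a * (sw s)%:R + b * (sumn s)%:R.
Proof.
under eq_bigr => j _ do rewrite mulrDr.
rewrite big_split /= -sum_nth -sum_jnth !natr_sum !mulr_sumr; congr (_ + _); apply: eq_bigr => j _.
  by rewrite natrM; ring.
by ring.
Qed.

Section Tree.
Variable k : nat.
Local Notation p := (p k).

Lemma tree_id s : (0 < sumn s)%N ->
  \sum_(j < size s) (if (0 < nth 0%N s j)%N then
     (hook_factor j.+1 (sumn s)).[k%:R] * p (j.+1 * k)%:R (dec j s) else 0) = p k%:R s.
Proof.
case En: (sumn s) => [|n] // _.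
case: n En => [|n'] En.
  rewrite (pE k _ En) facv1 // ff0.
  rewrite (eq_bigr (fun j : 'I_(size s) => (nth 0%N s j)%:R * k%:R)); last first.
    move=> j _; case: ifP => Hj; last by (have ->: nth 0%N s j = 0%N by lia); rewrite mulr0n mul0r.
    rewrite pE0; last by have := sumn_dec Hj; lia.
    have ->: nth 0%N s j = 1%N by have := nth_le_sumn s j; lia.
    rewrite hook_val !muln1 /=.
    have Hj1 : (j.+1)%:R != 0 :> rat by rewrite pnatr_eq0.
    by rewrite mulr1 mul1r addrK mulrC mulKf.
  by rewrite -big_distrl /= -natr_sum sum_nth En; field.
have key : forall j : 'I_(size s), (if (0 < nth 0%N s j)%N then
     (hook_factor j.+1 n'.+2).[k%:R] * p (j.+1 * k)%:R (dec j s) else 0)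
   = (nth 0%N s j)%:R * ((k%:R * n'.+2%:R) * j%:R + (k%:R + 1 - n'.+2%:R)) *
     (k%:R * (ff (k%:R + (sw s * k)%:R - 1) n' / (facv s)%:R) / n'.+2%:R).
  move=> j; case: ifP => Hj; last by (have ->: nth 0%N s j = 0%N by lia); rewrite mulr0n !mul0r.
  have Hs := sumn_dec Hj; have Hw := sw_dec Hj; have Hf := facv_dec Hj.
  rewrite hook_val (@pE k _ _ n'); last by lia.
  have -> : (j.+1 * k)%:R + (sw (dec j s) * k)%:R = k%:R + (sw s * k)%:R :> rat.
    by rewrite -!natrD; congr (_%:R); rewrite -Hw; nia.
  rewrite Hf !natrM /=.
  have H1 := ler0n rat j; have H2 := ler0n rat n'.
  have Hm : (nth 0%N s j)%:R != 0 :> rat by rewrite pnatr_eq0 -lt0n.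
  have Hd := fac_neq0 (dec j s).
  rewrite -[n'.+2]addn2 natrD; field.
  by rewrite Hd Hm /= -natrD nat1r !pnatr_eq0 addn2.
rewrite (eq_bigr _ (fun j _ => key j)) -big_distrl /= sum_lin2 En.
rewrite (pE k _ (n:=n'.+1) En) ffSr natrM -[n'.+2]addn2 natrD.
have Hd := fac_neq0 s; have H2 := ler0n rat n'.
field.
by rewrite Hd /= -natrD pnatr_eq0 addn2.
Qed.
End Tree.

Local Close Scope ring_scope.
Fixpoint ptree_ind' (P : ptree -> Prop) (H : forall cs, Forall P cs -> P (Node cs)) (t : ptree) : P t :=
  match t with
  | Node cs => H cs ((fix go (l : seq ptree) : Forall P l :=
       match l with [::] => Forall_nil P | c :: l' => Forall_cons c (ptree_ind' H c) (go l') end) cs)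
  end.

Fixpoint enc (t : ptree) : GenTree.tree nat := let: Node cs := t in GenTree.Node 0 (map enc cs).
Fixpoint decT (g : GenTree.tree nat) : ptree :=
  match g with GenTree.Leaf _ => Node [::] | GenTree.Node _ gs => Node (map decT gs) end.

Lemma encK : cancel enc decT.
Proof.
elim/ptree_ind' => cs H /=; congr Node.
by elim: H => //= c l Hc _ ->; rewrite Hc.
Qed.

HB.instance Definition _ := Equality.copy ptree (can_type encK).

Lemma node_inj : injective Node. Proof. by move=> x y []. Qed.

Definition TTf (rec : seq nat -> seq pforest) (s : seq nat) : seq ptree :=
  (if sumn s == 0%N then [:: Node [::]] else [::]) ++
  flatten [seq map Node (rec ((1 + sw s)%N :: dec j s)) | j <- [seq j <- iota 0 (size s) | (0 < nth 0%N s j)%N]].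

Fixpoint FF (N : nat) (r : seq nat) {struct N} : seq pforest :=
  match N with
  | 0 => [::]
  | N'.+1 =>
    match r with
    | [::] => [:: [::]]
    | a :: m =>
      if (a + sumn m == 0)%N then [:: [::]] else
      flatten [seq [seq t :: f | t <- TTf (FF N') s, f <- FF N' ((a - (1 + sw s)) :: vsub m s)]
              | s <- [seq s <- SUB m | (1 + sw s <= a)%N]]
    end
  end.

Lemma FF_cons N a m : FF N.+1 (a :: m) =
  if (a + sumn m == 0)%N then [:: [::]] else
      flatten [seq [seq t :: f | t <- TTf (FF N) s, f <- FF N ((a - (1 + sw s)) :: vsub m s)]
              | s <- [seq s <- SUB m | (1 + sw s <= a)%N]].
Proof. by []. Qed.

Lemma mem_TTf rec s t : t \in TTf rec s ->
  (sumn s = 0%N /\ t = Node [::]) \/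
  exists2 j, (j < size s)%N /\ (0 < nth 0%N s j)%N & exists2 cs, cs \in rec ((1 + sw s)%N :: dec j s) & t = Node cs.
Proof.
rewrite mem_cat => /orP [|].
  by case: eqP => // H; rewrite mem_seq1 => /eqP ->; left.
case/flatten_mapP => j; rewrite mem_filter mem_iota add0n => /andP [Hj Hj2] /mapP [cs Hcs ->].
by right; exists j => //; exists cs.
Qed.

Lemma mem_FF N a m F : F \in FF N.+1 (a :: m) ->
  (a + sumn m = 0%N /\ F = [::]) \/
  exists s, [/\ s \in SUB m, (1 + sw s <= a)%N &
    exists t f, [/\ t \in TTf (FF N) s, f \in FF N ((a - (1 + sw s)) :: vsub m s) & F = t :: f]].
Proof.
rewrite FF_cons; case: eqP => [H|H].
  by rewrite mem_seq1 => /eqP ->; left.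
case/flatten_mapP => s; rewrite mem_filter => /andP [Hs1 Hs2] /allpairsP [[t f] /= [Ht Hf ->]].
by right; exists s; split => //; exists t, f.
Qed.

Ltac lia' := repeat match goal with H : is_true (_ \in _) |- _ => clear H end; lia.

Lemma count_mem_cons (i x : nat) l : count_mem i (x :: l) = ((x == i) + count_mem i l)%N.
Proof. by []. Qed.

Lemma all2_nth s m i : all2 leq s m -> (nth 0%N s i <= nth 0%N m i)%N.
Proof. elim: m s i => [|a m IH] [|b s] [|i] //= /andP [H1 H2] //; exact: IH. Qed.

Definition Inv (F : pforest) (a : nat) (m : seq nat) :=
  [/\ of_type (a :: m) F, (size F + sw m)%N = a & sumn (map icount F) = sumn m].

Lemma Inv_TT N s t :
  (forall a m F, F \in FF N (a :: m) -> Inv F a m) ->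
  t \in TTf (FF N) s ->
  (forall i, count_mem i (degs t) = nth 0%N ((1 + sw s)%N :: s) i) /\ icount t = sumn s.
Proof.
move=> IH /mem_TTf [[Hs ->]|[j [Hj Hj2] [cs Hcs ->]]].
  split => //= i; rewrite (sumn0_sw Hs).
  by case: i => [|i] //=; rewrite sumn0_nth.
have [Ht Hsz Hic] := IH _ _ _ Hcs.
have Hw := sw_dec Hj2; have Hsd := sumn_dec Hj2.
have Hsc : size cs = j.+1.
  by move: Hsz Hw; move: (size cs) => z; clear; lia.
split.
  move=> i; rewrite [degs _]/= -/(forest_degs cs) count_mem_cons Ht Hsc.
  case: i => [|i] /=; first by move: Hw; clear; lia.
  rewrite nth_dec eqSS; case: (eqVneq i j) => [->|Hne].
    by rewrite /= add1n subn1 prednK.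
  by rewrite /= subn0.
rewrite /= Hic Hsc /=; move: Hsd; clear; lia.
Qed.

Lemma FF_Inv N a m F : F \in FF N (a :: m) -> Inv F a m.
Proof.
elim: N a m F => [|N IH] a m F //.
case/mem_FF => [[Ha ->]|[s [Hs Hsw [t [f [Ht Hf ->]]]]]].
  split => //=; last by lia.
  - by move=> i; case: i => [|i] /=; [lia | rewrite sumn0_nth //; lia].
  - by rewrite sumn0_sw //; lia.
have [Tt Tic] := Inv_TT IH Ht.
have [Ff Fsz Fic] := IH _ _ _ Hf.
have Hs' := Hs; rewrite mem_SUB in Hs'.
have [Hv1 Hv2] := sw_vsub Hs'.
have Hsz := SUB_size Hs.
split.
- move=> i; rewrite /forest_degs /= count_cat -/(forest_degs f) Tt Ff.
  case: i => [|i] /=; first lia.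
  by rewrite nth_vsub // ; have := all2_nth i Hs'; lia.
- by rewrite /=; lia.
- by rewrite /= Fic Tic; lia.
Qed.

Lemma nth0_sumn m : (forall i, nth 0%N m i = 0%N) -> sumn m = 0%N.
Proof. elim: m => [|a m IH] //= H; have := H 0%N; have := IH (fun i => H i.+1); simpl; lia. Qed.

Lemma fdegs_cons t f : forest_degs (t :: f) = degs t ++ forest_degs f.
Proof. by []. Qed.

Lemma degs_node cs : degs (Node cs) = size cs :: forest_degs cs.
Proof. by []. Qed.

Lemma all2_from_nth s m : size s = size m -> (forall i, nth 0%N s i <= nth 0%N m i)%N -> all2 leq s m.
Proof.
elim: m s => [|a m IH] [|b s] //= [Hs] H; apply/andP; split; first exact: (H 0%N).
by apply: IH => // i; exact: (H i.+1).
Qed.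

Lemma FF_complete N F a m : (size (forest_degs F) < N)%N -> of_type (a :: m) F ->
  F \in FF N (a :: m).
Proof.
elim: N F a m => [//|N IH] [|t f] a m Hsz HF.
  have Ha : a = 0%N by have := HF 0%N.
  have Hm : sumn m = 0%N by apply: nth0_sumn => i; have := HF i.+1.
  by rewrite FF_cons Ha Hm.
case: t HF Hsz => cs HF Hsz.
set K := size m.
have Hbig : forall i, (K < i)%N -> count_mem i (forest_degs (Node cs :: f)) = 0%N.
  by move=> i Hi; rewrite HF nth_default //= -/K; lia.
have Hsplit : forall i, count_mem i (forest_degs (Node cs :: f)) =
   (count_mem i (degs (Node cs)) + count_mem i (forest_degs f))%N.
  by move=> i; rewrite fdegs_cons count_cat.
set c := count_mem 0 (forest_degs cs) :: mkseq (fun i => count_mem i.+1 (forest_degs cs)) K.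
have Hc : of_type c cs.
  case=> [|i] //=; case: (ltnP i K) => Hi; first by rewrite nth_mkseq.
  rewrite nth_default ?size_mkseq //.
  have := Hbig i.+1 Hi; rewrite Hsplit degs_node count_mem_cons.
  by move/eqP; rewrite !addn_eq0 => /andP [/andP [_ /eqP ->] _].
have Hcs : cs \in FF N c.
  apply: IH => //; move: Hsz; rewrite fdegs_cons degs_node /= size_cat; lia.
have [_ HcI _] := FF_Inv Hcs.
set s := mkseq (fun i => count_mem i.+1 (degs (Node cs))) K.
have HsK : size s = K by rewrite size_mkseq.
have HtS : forall i, count_mem i.+1 (degs (Node cs)) = nth 0%N s i.
  move=> i; case: (ltnP i K) => Hi; first by rewrite nth_mkseq.
  rewrite nth_default ?size_mkseq //.
  by have := Hbig i.+1 Hi; rewrite Hsplit; move/eqP; rewrite addn_eq0 => /andP [/eqP -> _].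
have [H0 Tmem] : count_mem 0 (degs (Node cs)) = (1 + sw s)%N /\ Node cs \in TTf (FF N) s.
  case Ecs: cs => [|c0 cs'].
    have Hs0 : sumn s = 0%N by apply: nth0_sumn => i; rewrite -HtS Ecs.
    by rewrite (sumn0_sw Hs0) /TTf Hs0 eqxx mem_cat mem_seq1 eqxx.
  rewrite -Ecs; set j := (size cs).-1.
  have Hj : size cs = j.+1 by rewrite /j Ecs.
  have HjK : (j < K)%N.
    rewrite ltnNge; apply/negP => HKj.
    have := Hbig j.+1 HKj; rewrite Hsplit degs_node count_mem_cons Hj eqxx; lia.
  have Hsj : (0 < nth 0%N s j)%N by rewrite -HtS degs_node count_mem_cons Hj eqxx.
  have Hdec : dec j s = behead c.
    apply: (@eq_from_nth _ 0%N); first by rewrite size_dec HsK /= size_mkseq.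
    move=> i; rewrite size_dec HsK => Hi.
    rewrite nth_dec -HtS [behead c]/= nth_mkseq // degs_node count_mem_cons Hj eqSS.
    by case: (eqVneq i j) => [->|Hne]; rewrite /= ?add1n ?subn1 ?subn0.
  have Hw := sw_dec Hsj; rewrite Hdec /= in Hw.
  have H0 : count_mem 0 (degs (Node cs)) = (1 + sw s)%N.
    rewrite degs_node count_mem_cons Hj /=; move: HcI Hw; rewrite Hj; move: (sw s) (sw (mkseq _ _)) (count_mem 0 _) => x y z; clear; lia.
  split => //.
  rewrite /TTf mem_cat; apply/orP; right; apply/flatten_mapP; exists j.
    by rewrite mem_filter Hsj mem_iota HsK.
  apply/mapP; exists cs => //.
  suff -> : ((1 + sw s)%N :: dec j s) = c by [].
  by rewrite Hdec -H0 degs_node count_mem_cons Hj.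
have Hsub : s \in SUB m.
  rewrite mem_SUB; apply: all2_from_nth => [|i]; first by rewrite HsK.
  have := HF i.+1; rewrite Hsplit -HtS /=; move: (count_mem _ _) (count_mem _ _) => x y; lia.
have Hle : (1 + sw s <= a)%N.
  have := HF 0%N; rewrite Hsplit H0 /=; move: (count_mem _ _) (sw s) => x y; lia.
have Hf : f \in FF N ((a - (1 + sw s))%N :: vsub m s).
  apply: IH.
    by move: Hsz; rewrite fdegs_cons degs_node /= size_cat; lia.
  case=> [|i] /=.
    have := HF 0%N; rewrite Hsplit H0 /=; move: (count_mem _ _) (sw s) => x y; lia.
  rewrite nth_vsub ?HsK //.
  have := HF i.+1; rewrite Hsplit HtS /=; move: (count_mem _ _) (nth _ s _) => x y; lia.
rewrite FF_cons ifF; last by apply/negbTE; move: Hle; move: (sw s) => y; lia.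
apply/flatten_mapP; exists s; first by rewrite mem_filter Hle Hsub.
by apply/allpairsP; exists (Node cs, f).
Qed.

Local Close Scope ring_scope.
Lemma uniq_flatten_map (T U : eqType) (g : T -> seq U) (L : seq T) :
  uniq L -> (forall x, x \in L -> uniq (g x)) ->
  (forall x y z, x \in L -> y \in L -> z \in g x -> z \in g y -> x = y) ->
  uniq (flatten (map g L)).
Proof.
elim: L => [|x L IH] //= /andP [HxL HL] Hu Hd.
rewrite cat_uniq Hu ?mem_head // IH //; last first.
- by move=> y z w Hy Hz; apply: Hd; rewrite in_cons ?Hy ?Hz orbT.
- by move=> y Hy; apply: Hu; rewrite in_cons Hy orbT.
rewrite andbT; apply/hasPn => z /flatten_mapP [y Hy Hz]; apply/negP => Hzx.
have Hy' : y \in x :: L by rewrite in_cons Hy orbT.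
have Exy := Hd x y z (mem_head _ _) Hy' Hzx Hz.
by move: HxL; rewrite Exy Hy.
Qed.

Lemma size_FF_elem N j s cs : (0 < nth 0%N s j)%N -> cs \in FF N ((1 + sw s)%N :: dec j s) -> size cs = j.+1.
Proof.
move=> Hj /FF_Inv [_ Hsz _]; have := sw_dec Hj.
by move: Hsz; move: (size cs) (sw _) (sw s) => x y z; lia.
Qed.

Lemma FF_uniq N : forall r, uniq (FF N r).
Proof.
elim: N => [|N IH] [|a m] //.
rewrite FF_cons; case: ifP => // _.
apply: uniq_flatten_map.
- by rewrite filter_uniq // SUB_uniq.
- move=> s _; apply: allpairs_uniq => //; last by move=> [t f] [t' f'] _ _ /= [-> ->].
  rewrite /TTf cat_uniq; apply/and3P; split.
  + by case: (_ == _).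
  + apply/hasPn => z /flatten_mapP [j]; rewrite mem_filter => /andP [Hj _] /mapP [cs Hcs ->].
    case: (_ == _) => //; rewrite mem_seq1; apply/negP => /eqP [] E.
    by have := size_FF_elem Hj Hcs; rewrite E.
  + apply: uniq_flatten_map.
    * by rewrite filter_uniq // iota_uniq.
    * by move=> j _; rewrite map_inj_uniq //; exact: node_inj.
    * move=> j j' z; rewrite !mem_filter => /andP [Hj _] /andP [Hj' _] /mapP [cs Hcs ->] /mapP [cs' Hcs' []] E.
      have := size_FF_elem Hj Hcs; have := size_FF_elem Hj' Hcs'; rewrite -E => -> []; done.
- move=> s s' z; rewrite !mem_filter => /andP [_ Hs] /andP [_ Hs'] /allpairsP [[t f] /= [Ht _ ->]]
     /allpairsP [[t' f'] /= [Ht' _ [E _]]].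
  rewrite -{}E in Ht'.
  have [T1 _] := Inv_TT (fun a m F H => FF_Inv H) Ht.
  have [T2 _] := Inv_TT (fun a m F H => FF_Inv H) Ht'.
  apply: (@eq_from_nth _ 0%N); first by rewrite (SUB_size Hs) (SUB_size Hs').
  by move=> i _; have := T1 i.+1; rewrite T2.
Qed.

Lemma count_size_sumn (l : seq nat) r : (forall i, count_mem i l = nth 0%N r i) -> size l = sumn r.
Proof.
elim: l r => [|x l IH] r H.
  by rewrite nth0_sumn // => i; rewrite -H.
have Hx : (0 < nth 0%N r x)%N by rewrite -H count_mem_cons eqxx.
rewrite /= (IH (dec x r)); first by have := sumn_dec Hx; lia.
move=> i; rewrite nth_dec -H count_mem_cons eq_sym.
by case: (i == x) => /=; rewrite ?add1n ?add0n ?subn1 ?subn0.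
Qed.

Local Open Scope ring_scope.
Lemma Hpoly_nil : Hpoly_of [::] = 1.
Proof. by rewrite /Hpoly_of big_nil. Qed.

Lemma Hpoly_cons t f : Hpoly_of (t :: f) = Hpoly_of [:: t] * Hpoly_of f.
Proof. by rewrite /Hpoly_of /forest_ivdata /= big_cat /= cats0. Qed.

Lemma Hpoly_node cs : Hpoly_of [:: Node cs] =
  (if cs is [::] then 1 else hook_factor (size cs) (icount (Node cs))) * Hpoly_of cs.
Proof.
rewrite /Hpoly_of /forest_ivdata /= cats0.
by case: cs => [|c cs] /=; rewrite ?big_nil ?mul1r // big_cons.
Qed.

Definition Gv k a m : rat := if (a < sw m)%N then 0 else p k ((a - sw m) * k)%:R m.

Section Sums.
Variable k : nat.
Local Notation Pv F := (Hpoly_of F).[k%:R].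

Lemma TT_sum N s :
  (forall a m, (a + sumn m < N)%N -> \sum_(F <- FF N (a :: m)) Pv F = Gv k a m) ->
  (1 + sw s + sumn s <= N)%N ->
  \sum_(t <- TTf (FF N) s) Pv [:: t] = p k k%:R s.
Proof.
move=> IH Hb; rewrite /TTf big_cat /= big_flatten /= big_map.
case Es: (sumn s) => [|n] /=.
  rewrite big_seq1 Hpoly_node Hpoly_nil mul1r hornerC big1_seq ?addr0 ?pE0 //.
  by move=> j; rewrite mem_filter sumn0_nth.
rewrite big_nil add0r big_filter big_mkcond /=.
rewrite (_ : iota 0 (size s) = index_iota 0 (size s)); last by rewrite /index_iota subn0.
rewrite big_mkord.
rewrite -(tree_id k (s := s)); last by rewrite Es.
apply: eq_bigr => j _; case: ifP => Hj //.
rewrite big_map (eq_big_seq (fun cs => (hook_factor j.+1 (sumn s)).[k%:R] * Pv cs)); last first.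
  move=> cs Hcs; rewrite Hpoly_node hornerM.
  have Hsz := size_FF_elem Hj Hcs.
  have [_ _ Hic] := FF_Inv Hcs.
  have Hic' : icount (Node cs) = sumn s.
    rewrite /= -/(sumn _) Hic Hsz; have := sumn_dec Hj; lia.
  rewrite -Hsz -Hic'; by case: cs Hsz {Hcs Hic Hic'}.
rewrite -big_distrr /= IH; last first.
  have := sumn_dec Hj; have := sw_dec Hj; lia.
rewrite /Gv ifF; last by have := sw_dec Hj; lia.
by congr (_ * p k _ _); congr (_%:R); have := sw_dec Hj; lia.
Qed.
Lemma FF_sum N a m : (a + sumn m < N)%N -> \sum_(F <- FF N (a :: m)) Pv F = Gv k a m.
Proof.
elim: N a m => [//|N IH] a m Hb.
rewrite FF_cons; case: ifP => Hz.
  move/eqP: Hz => Hz.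
  have Ha : a = 0%N by lia.
  have Hm : sumn m = 0%N by lia.
  by rewrite big_seq1 Hpoly_nil hornerC /Gv (sumn0_sw Hm) Ha /= pE0.
rewrite big_flatten /= big_map big_filter big_seq_cond.
rewrite (eq_bigr (fun s => p k k%:R s * Gv k (a - (1 + sw s)) (vsub m s))); last first.
  move=> s /andP [Hs Hc].
  have Hs' := Hs; rewrite mem_SUB in Hs'; have [Hv1 Hv2] := sw_vsub Hs'.
  rewrite big_allpairs_dep.
  under eq_bigr => t _ do (under eq_bigr => f _ do rewrite Hpoly_cons hornerM; rewrite -big_distrr /=).
  rewrite -big_distrl /= IH; last by lia.
  by rewrite (TT_sum IH) //; lia.
case: (leqP (1 + sw m) a) => Ha.
  rewrite (eq_bigr (fun s => p k k%:R s * p k ((a - sw m).-1 * k)%:R (vsub m s))); last first.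
    move=> s /andP [Hs Hc].
    have Hs' := Hs; rewrite mem_SUB in Hs'; have [Hv1 Hv2] := sw_vsub Hs'.
    rewrite /Gv ifF; last by lia.
    by congr (_ * p k _ _); congr (_%:R); congr (_ * k)%N; lia.
  rewrite (eq_bigl (fun s => s \in SUB m)); last first.
    move=> s /=; case Hs: (s \in SUB m) => //=.
    have Hs' := Hs; rewrite mem_SUB in Hs'; have [Hv1 Hv2] := sw_vsub Hs'.
    apply/idP; lia.
  rewrite -big_seq -binom /Gv ifF; last by lia.
  congr (p k _ m); congr (_%:R).
  have -> : (a - sw m = (a - sw m).-1.+1)%N by lia.
  by rewrite mulSn.
rewrite big1; last first.
  move=> s /andP [Hs Hc].
  have Hs' := Hs; rewrite mem_SUB in Hs'; have [Hv1 Hv2] := sw_vsub Hs'.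
  by rewrite /Gv ifT ?mulr0 //; lia.
rewrite /Gv; case: ifP => // Hlt.
have Hm : sumn m <> 0%N.
  move=> Hm; move: Hz; rewrite Hm (sumn0_sw Hm) in Ha *; move: Hlt; lia.
case Es: (sumn m) => [|n] //.
have -> : ((a - sw m) * k = 0)%N by move: Hlt; lia.
by rewrite (pE k _ Es) !mul0r.
Qed.
End Sums.

Local Open Scope ring_scope.
Lemma nint_cons a m : nint (a :: m) = sumn m.
Proof.
rewrite /nint big_add1 /= big_mkord -sum_nth.
by apply: eq_bigr.
Qed.

Lemma facR m : \prod_(i < size m) ((nth 0%N m i)`!)%:R = (facv m)%:R :> rat.
Proof.
elim: m => [|a m IH]; first by rewrite big_ord0.
by rewrite big_ord_recl /= IH natrM.
Qed.

Lemma fac_cons a m : \prod_(1 <= d < size (a :: m)) ((nth 0%N (a :: m) d)`!)%:R = (facv m)%:R :> rat.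
Proof.
rewrite big_add1 /= big_mkord -facR.
by apply: eq_bigr.
Qed.

Lemma ell_cons a m : ell (a :: m) = a%:Z - (sw m)%:Z.
Proof.
rewrite /ell big_ord_recl /= mul1r; congr (_ + _).
rewrite -sum_jnth -natz natr_sum -sumrN; apply: eq_bigr => j _.
rewrite /bump /= add1n natz add0n PoszM -[j.+1]addn1 PoszD; ring.
Qed.

Lemma rhs_eval k a m : (1 + sw m <= a)%N ->
  (rhs_poly (a :: m)).[k%:R] = p k ((a - sw m) * k)%:R m.
Proof.
move=> Ha.
rewrite /rhs_poly nint_cons fac_cons ell_cons !hornerM !hornerC horner_prod /=.
rewrite (eq_bigr (fun i : 'I_(sumn m) => (a * k)%:R - i%:R)); last first.
  by move=> i _; rewrite hornerD hornerN hornerZ hornerX hornerC natrM.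
rewrite -/(ff _ _) intrB.
have Ha0 : a%:R != 0 :> rat by rewrite pnatr_eq0; lia.
have Hf := fac_neq0 m.
case Es: (sumn m) => [|n].
  rewrite pE0 // ff0 facv0 // (sumn0_sw Es) mulr1 subr0.
  by rewrite mulfV // invr1.
rewrite (pE k _ Es) ffS.
have -> : ((a - sw m) * k)%:R + (sw m * k)%:R = (a * k)%:R :> rat.
  by rewrite -natrD; congr (_%:R); rewrite -mulnDl subnK //; lia.
rewrite -!pmulrn.
rewrite !natrM.
rewrite natrB; last by lia.
by field; rewrite Ha0 Hf.
Qed.

Lemma poly_eq_nat (P Q : {poly rat}) : (forall k : nat, P.[k%:R] = Q.[k%:R]) -> P = Q.
Proof.
move=> H; apply/eqP; rewrite -subr_eq0; apply/negPn/negP => HPQ.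
have := @max_poly_roots _ (P - Q) [seq i%:R | i <- iota 0 (size (P - Q))] HPQ.
rewrite size_map size_iota ltnn => Hc; apply: notF; apply: Hc.
  by apply/allP => x /mapP [i _ ->]; rewrite /root hornerD hornerN H subrr.
by rewrite map_inj_uniq ?iota_uniq // => x y /eqP; rewrite eqr_nat => /eqP.
Qed.

Local Open Scope ring_scope.
Lemma In_mem (T : eqType) (x : T) s : In x s <-> x \in s.
Proof.
elim: s => [|y s IH] //=; rewrite in_cons; split.
- by case=> [->|/IH ->]; rewrite ?eqxx ?orbT.
- by case/orP => [/eqP ->|/IH]; [left | right].
Qed.

Lemma NoDup_uniq (T : eqType) (s : seq T) : NoDup s <-> uniq s.
Proof.
elim: s => [|x s IH] /=; first by split => // _; constructor.
split.
- move=> H; inversion H; subst; apply/andP; split; last by apply/IH.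
  by apply/negP => /In_mem.
- move=> /andP [Hx Hs]; constructor; last by apply/IH.
  by move/In_mem; apply/negP.
Qed.

Theorem theorem2p3 (r : seq nat) (hl : 1 <= ell r) :
  (exists s : seq pforest, NoDup s /\ (forall F, In F s <-> of_type r F)) /\
  (forall s : seq pforest, NoDup s -> (forall F, In F s <-> of_type r F) ->
     \sum_(F <- s) Hpoly_of F = rhs_poly r).
Proof.
case: r hl => [|a m] hl.
  by move: hl; rewrite /ell big_ord0.
have Ha : (1 + sw m <= a)%N by move: hl; rewrite ell_cons; lia.
set s0 := FF (a + sumn m).+1 (a :: m).
have Hmem : forall F, F \in s0 <-> of_type (a :: m) F.
  move=> F; split; first by case/FF_Inv.
  move=> HF; apply: FF_complete => //.
  by rewrite (@count_size_sumn (forest_degs F) (a :: m) HF) /=.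
have Hu : uniq s0 by apply: FF_uniq.
split.
  exists s0; split; first by apply/NoDup_uniq.
  by move=> F; rewrite In_mem.
move=> s Hnd Hs.
have Hperm : perm_eq s s0.
  apply: uniq_perm; first by apply/NoDup_uniq.
    by [].
  move=> F; apply/idP/idP => H.
    by apply/Hmem/Hs/In_mem.
  by apply/In_mem/Hs/Hmem.
rewrite (perm_big _ Hperm); apply: poly_eq_nat => k.
rewrite horner_sum FF_sum // rhs_eval // /Gv ifF //; lia.
Qed.
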